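(* Let $\mu$ be a signature consisting of a single ternary relation symbol. There is an $\aleph_1$-bounded ideal $\mathcal A$ of $\Omega^*_\mu$ which is not representable.
   Context: A relational structure of signature $\mu$ here is a pair $(A;T)$ with $T$ a ternary relation on the set $A$. An embedding is an injective map preserving and reflecting $T$; $\mathfrak A\le\mathfrak B$ means $\mathfrak A$ embeds into $\mathfrak B$. $\Omega^*_\mu$ is the class of isomorphism types of (arbitrary cardinality) relational structures of signature $\mu$, quasi-ordered by $\le$. An ideal of $\Omega^*_\mu$ is a non-empty set (not a proper class) of such isomorphism types which is downward closed under $\le$ and up-directed. An ideal $\mathcal A$ is $\kappa$-bounded if all its elements have cardinality less than $\kappa$ and for every cardinal $\lambda<\kappa$ there is an element of $\mathcal A$ of cardinality $\lambda$. An ideal $\mathcal J$ of subsets of a set $A$ is a non-empty family of subsets of $A$ that is closed under taking subsets and up-directed under inclusion. For a relational structure $\mathfrak A$ and an ideal $\mathcal J$ of subsets of $A$, $\mathrm{age}_{\mathcal J}(\mathfrak A)$ is the set of isomorphism types of the induced substructures $\mathfrak A_{\restriction S}$ for $S\in\mathcal J$. An ideal $\mathcal C$ of $\Omega^*_\mu$ is representable if there exist a relational structure $\mathfrak A$ of signature $\mu$ and an ideal $\mathcal J$ of subsets of $A$ with $\mathrm{age}_{\mathcal J}(\mathfrak A)=\mathcal C$. *)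

(* Defs.v *)
From Stdlib Require Import Arith.

Record tstruct : Type := TStruct {
  carrier :> Type;
  rel : carrier -> carrier -> carrier -> Prop
}.

Definition is_embedding (A B : tstruct) (f : A -> B) : Prop :=
  (forall x y, f x = f y -> x = y) /\
  (forall a b c, rel A a b c <-> rel B (f a) (f b) (f c)).

Definition embeds (A B : tstruct) : Prop := exists f : A -> B, is_embedding A B f.

Definition isomorphic (A B : tstruct) : Prop :=
  exists f : A -> B, is_embedding A B f /\ (forall y, exists x, f x = y).

(* A "set of isomorphism types" of Omega*_mu is modelled as a predicate on
   structures that is closed under isomorphism. *)
Definition iso_closed (C : tstruct -> Prop) : Prop :=
  forall A B, isomorphic A B -> C A -> C B.

Definition is_ideal (C : tstruct -> Prop) : Prop :=
  iso_closed C /\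
  (exists A, C A) /\
  (forall A B, embeds A B -> C B -> C A) /\
  (forall A B, C A -> C B -> exists D, C D /\ embeds A D /\ embeds B D).

Definition has_card_fin (X : Type) (n : nat) : Prop :=
  exists f : X -> {k : nat | k < n},
    (forall x y, f x = f y -> x = y) /\ (forall k, exists x, f x = k).

Definition countably_infinite (X : Type) : Prop :=
  exists f : X -> nat,
    (forall x y, f x = f y -> x = y) /\ (forall k, exists x, f x = k).

Definition card_lt_aleph1 (X : Type) : Prop :=
  exists f : X -> nat, forall x y, f x = f y -> x = y.

(* aleph_1-bounded: all elements have cardinality < aleph_1, and for every
   cardinal lambda < aleph_1 (i.e. every finite n, and aleph_0) there is an
   element of cardinality lambda. *)
Definition aleph1_bounded (C : tstruct -> Prop) : Prop :=
  (forall A, C A -> card_lt_aleph1 A) /\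
  (forall n : nat, exists A, C A /\ has_card_fin A n) /\
  (exists A, C A /\ countably_infinite A).

Definition is_set_ideal (X : Type) (J : (X -> Prop) -> Prop) : Prop :=
  (exists S, J S) /\
  (forall S S', (forall x, S' x -> S x) -> J S -> J S') /\
  (forall S1 S2, J S1 -> J S2 ->
     exists S3, J S3 /\ (forall x, S1 x -> S3 x) /\ (forall x, S2 x -> S3 x)).

Definition restrict (A : tstruct) (S : A -> Prop) : tstruct :=
  {| carrier := {x : A | S x};
     rel := fun a b c => rel A (proj1_sig a) (proj1_sig b) (proj1_sig c) |}.

Definition age_eq (A : tstruct) (J : (A -> Prop) -> Prop) (C : tstruct -> Prop) : Prop :=
  forall B, C B <-> exists S, J S /\ isomorphic B (restrict A S).

Definition representable (C : tstruct -> Prop) : Prop :=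
  exists (A : tstruct) (J : (A -> Prop) -> Prop), is_set_ideal A J /\ age_eq A J C.

(* Main.v *)
Require Import Defs.
From Stdlib Require Import Arith Cantor PeanoNat Lia Classical ClassicalEpsilon ProofIrrelevance.

Record fullp := { fs : nat -> nat -> bool; fc : nat -> nat -> nat }.

Definition good (p : fullp) : Prop :=
  (forall i j j', i <> j -> i <> j' -> fc p i j = fc p i j' -> j = j') /\
  exists L, forall i j, fst (Cantor.of_nat (fc p i j)) < L.

Definition FT (p : fullp) (a b c : nat + nat) : Prop :=
  match a, b, c with
  | inl a, inl b, inl c => (a = b /\ c = S a) \/ (a = 0 /\ b = 1 /\ c = 1)
  | inr i, inr j, inr k => i = j /\ j = k
  | inl n, inr i, inl m => n = m /\ fs p i n = true
  | inr i, inr j, inl m => i <> j /\ fc p i j = m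
  | _, _, _ => False
  end.

Definition Full (p : fullp) : tstruct := {| carrier := (nat + nat)%type; rel := FT p |}.

Definition Cid (B : tstruct) : Prop := exists p, good p /\ embeds B (Full p).

Lemma emb_comp (A B D : tstruct) : embeds A B -> embeds B D -> embeds A D.
Proof.
  intros [f [fi fr]] [g [gi gr]]. exists (fun x => g (f x)). split.
  - intros x y H. apply fi, gi, H.
  - intros a b c. rewrite fr. apply gr.
Qed.

Lemma emb_id (A : tstruct) : embeds A A.
Proof. exists (fun x => x). split; [auto| intros; tauto]. Qed.

Lemma rigid p q (e : nat + nat -> nat + nat) :
  (forall x y, e x = e y -> x = y) ->
  (forall a b c, FT p a b c <-> FT q (e a) (e b) (e c)) ->
  forall n, e (inl n) = inl n.
Proof.
  intros ei er. induction n.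
  - assert (H : FT q (e (inl 0)) (e (inl 1)) (e (inl 1))).
    { apply er. simpl. right. auto. }
    assert (Hne : e (inl 0) <> e (inl 1)).
    { intro E. apply ei in E. discriminate. }
    destruct (e (inl 0)) as [a|a]; destruct (e (inl 1)) as [b|b]; simpl in H; try tauto.
    + destruct H as [[H1 H2]|[H1 [H2 H3]]]; [lia| subst; auto].
    + destruct H as [H1 _]. subst. tauto.
  - assert (H : FT q (e (inl n)) (e (inl n)) (e (inl (S n)))).
    { apply er. simpl. left. auto. }
    rewrite IHn in H. destruct (e (inl (S n))) as [c|c]; simpl in H; try tauto.
    destruct H as [[_ H]|[H1 [H2 _]]]; [subst; auto| lia].
Qed.

Lemma xelem q u : FT q u u u -> exists i, u = inr i.
Proof.
  destruct u as [a|a]; simpl; intros H; [|eauto].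
  destruct H as [[_ H]|[H1 [H2 _]]]; lia.
Qed.

Definition pr (r : nat -> bool) : fullp :=
  {| fs := fun _ n => r n; fc := fun _ j => Cantor.to_nat (0, j) |}.

Lemma good_pr r : good (pr r).
Proof.
  split.
  - unfold pr; cbn [fc]. intros i j j' _ _ H.
    apply (f_equal Cantor.of_nat) in H. rewrite !Cantor.cancel_of_to in H.
    congruence.
  - exists 1. intros i j. unfold pr; cbn [fc]. rewrite Cantor.cancel_of_to. simpl. lia.
Qed.

Definition p0 := pr (fun _ => false).

Definition liftmap (phi : nat -> nat) (x : nat + nat) : nat + nat :=
  match x with inl n => inl n | inr i => inr (phi i) end.

Lemma emb_full p p' (phi : nat -> nat) :
  (forall i j, phi i = phi j -> i = j) ->
  (forall i n, fs p' (phi i) n = fs p i n) ->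
  (forall i j, i <> j -> fc p' (phi i) (phi j) = fc p i j) ->
  embeds (Full p) (Full p').
Proof.
  intros pi hs hc. exists (liftmap phi). split.
  - intros [x|x] [y|y]; simpl; intro H; inversion H; auto; f_equal; apply pi; auto.
  - intros [a|a] [b|b] [c|c]; simpl; try tauto.
    + rewrite hs. tauto.
    + split; intros [H1 H2].
      * split; [intro E; apply pi in E; tauto| rewrite hc; auto].
      * assert (a <> b) by (intro E; subst; tauto). split; auto. rewrite <- hc; auto.
    + split; intros [H1 H2]; [subst; auto| apply pi in H1; apply pi in H2; subst; auto].
Qed.

Definition joinp (p1 p2 : fullp) (L : nat) : fullp :=
  {| fs := fun k n => if Nat.even k then fs p1 (Nat.div2 k) n else fs p2 (Nat.div2 k) n;
     fc := fun k l =>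
       if Nat.even k then
         (if Nat.even l then fc p1 (Nat.div2 k) (Nat.div2 l) else Cantor.to_nat (L, Nat.div2 l))
       else
         (if Nat.even l then Cantor.to_nat (L, Nat.div2 l) else fc p2 (Nat.div2 k) (Nat.div2 l)) |}.

Lemma par_eq k l : Nat.even k = Nat.even l -> Nat.div2 k = Nat.div2 l -> k = l.
Proof.
  intros H1 H2. rewrite (Nat.div2_odd k), (Nat.div2_odd l).
  unfold Nat.odd. rewrite H1, H2. reflexivity.
Qed.

Lemma lvl L j : fst (Cantor.of_nat (Cantor.to_nat (L, j))) = L.
Proof. rewrite Cantor.cancel_of_to. reflexivity. Qed.

Lemma toinj L j j' : Cantor.to_nat (L, j) = Cantor.to_nat (L, j') -> j = j'.
Proof.
  intro H. apply (f_equal Cantor.of_nat) in H. rewrite !Cantor.cancel_of_to in H. congruence.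
Qed.

Lemma good_join p1 p2 L1 L2 :
  good p1 -> good p2 ->
  (forall i j, fst (Cantor.of_nat (fc p1 i j)) < L1) ->
  (forall i j, fst (Cantor.of_nat (fc p2 i j)) < L2) ->
  good (joinp p1 p2 (L1 + L2)).
Proof.
  intros [g1 _] [g2 _] l1 l2. split.
  - intros k l l' Hl Hl' H. unfold joinp in H; cbn [fc] in H.
    destruct (Nat.even k) eqn:Ek; destruct (Nat.even l) eqn:El;
      destruct (Nat.even l') eqn:El'.
    + apply par_eq; [congruence|].
      eapply g1; [| |exact H].
      * intro E. apply Hl, par_eq; congruence.
      * intro E. apply Hl', par_eq; congruence.
    + exfalso. specialize (l1 (Nat.div2 k) (Nat.div2 l)). rewrite H, lvl in l1. lia.
    + exfalso. specialize (l1 (Nat.div2 k) (Nat.div2 l')). rewrite <- H, lvl in l1. lia.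
    + apply par_eq; [congruence|]. eapply toinj; exact H.
    + apply par_eq; [congruence|]. eapply toinj; exact H.
    + exfalso. specialize (l2 (Nat.div2 k) (Nat.div2 l')). rewrite <- H, lvl in l2. lia.
    + exfalso. specialize (l2 (Nat.div2 k) (Nat.div2 l)). rewrite H, lvl in l2. lia.
    + apply par_eq; [congruence|].
      eapply g2; [| |exact H].
      * intro E. apply Hl, par_eq; congruence.
      * intro E. apply Hl', par_eq; congruence.
  - exists (S (L1 + L2)). intros k l. unfold joinp; cbn [fc].
    destruct (Nat.even k); destruct (Nat.even l);
      try (rewrite lvl; lia).
    + specialize (l1 (Nat.div2 k) (Nat.div2 l)). lia.
    + specialize (l2 (Nat.div2 k) (Nat.div2 l)). lia.
Qed.

Lemma join_l p1 p2 L : embeds (Full p1) (Full (joinp p1 p2 L)).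
Proof.
  apply (emb_full _ _ (fun i => 2 * i)).
  - intros; lia.
  - intros i n. unfold joinp; cbn [fs fc]. rewrite Nat.even_even, Nat.div2_double. reflexivity.
  - intros i j _. unfold joinp; cbn [fs fc]. rewrite !Nat.even_even, !Nat.div2_double. reflexivity.
Qed.

Lemma join_r p1 p2 L : embeds (Full p2) (Full (joinp p1 p2 L)).
Proof.
  apply (emb_full _ _ (fun i => 2 * i + 1)).
  - intros; lia.
  - intros i n. unfold joinp; cbn [fs fc]. rewrite Nat.even_odd, Nat.div2_odd'. reflexivity.
  - intros i j _. unfold joinp; cbn [fs fc]. rewrite !Nat.even_odd, !Nat.div2_odd'. reflexivity.
Qed.

Lemma Cid_ideal : is_ideal Cid.
Proof.
  split; [|split; [|split]].
  - intros A B [f [[fi fr] fs']] [p [gp HA]].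
    exists p. split; auto. eapply emb_comp; [|exact HA].
    pose (finv := fun y => proj1_sig (constructive_indefinite_description _ (fs' y))).
    assert (Hf : forall y, f (finv y) = y).
    { intro y. unfold finv. destruct (constructive_indefinite_description _ _); auto. }
    exists finv. split.
    + intros x y H. rewrite <- (Hf x), <- (Hf y), H. reflexivity.
    + intros a b c. rewrite (fr (finv a) (finv b) (finv c)), !Hf. tauto.
  - exists (Full p0). exists p0. split; [apply good_pr| apply emb_id].
  - intros A B HAB [p [gp HB]]. exists p. split; auto. eapply emb_comp; eauto.
  - intros A B [p1 [g1 H1]] [p2 [g2 H2]].
    destruct g1 as [g1a [L1 l1]]. destruct g2 as [g2a [L2 l2]].
    exists (Full (joinp p1 p2 (L1 + L2))). split; [|split].
    + exists (joinp p1 p2 (L1 + L2)). split; [apply good_join; try split; eauto| apply emb_id].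
    + eapply emb_comp; [exact H1| apply join_l].
    + eapply emb_comp; [exact H2| apply join_r].
Qed.

Definition EmpS (X : Type) : tstruct := {| carrier := X; rel := fun _ _ _ => False |}.

Lemma emp_emb (X : Type) (f : X -> nat) : (forall x y, f x = f y -> x = y) -> Cid (EmpS X).
Proof.
  intros fi. exists p0. split; [apply good_pr|].
  exists (fun x => inl (2 * f x)). split.
  - intros x y H. inversion H. apply fi. lia.
  - intros a b c. simpl. split; [tauto|]. intros [[H1 H2]|[H1 [H2 H3]]]; lia.
Qed.

Lemma Cid_bounded : aleph1_bounded Cid.
Proof.
  split; [|split].
  - intros A [p [_ [e [ei _]]]].
    exists (fun x => match e x with inl n => 2 * n | inr n => 2 * n + 1 end).
    intros x y H. apply ei.
    destruct (e x) as [a|a]; destruct (e y) as [b|b]; f_equal; lia.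
  - intro n. exists (EmpS {k : nat | k < n}). split.
    + apply (emp_emb _ (fun x => proj1_sig x)).
      intros [x hx] [y hy]; simpl; intro; subst. f_equal. apply proof_irrelevance.
    + exists (fun x => x). split; auto. intro k; exists k; auto.
  - exists (EmpS nat). split.
    + apply (emp_emb _ (fun x => x)). auto.
    + exists (fun x => x). split; auto. intro k; exists k; auto.
Qed.

Definition copy (M : tstruct) (S : M -> Prop) (p : fullp) (h : nat + nat -> M) : Prop :=
  (forall x, S (h x)) /\ (forall x y, h x = h y -> x = y) /\
  (forall a b c, FT p a b c <-> rel M (h a) (h b) (h c)).

Definition locemb (M : tstruct) (S : M -> Prop) (q : fullp) (G : M -> nat + nat) : Prop :=
  (forall x y, S x -> S y -> G x = G y -> x = y) /\
  (forall a b c, S a -> S b -> S c -> (rel M a b c <-> FT q (G a) (G b) (G c))).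

Lemma get_copy (M : tstruct) J (Hage : age_eq M J Cid) p :
  good p -> exists S h, J S /\ copy M S p h.
Proof.
  intro gp. destruct (proj1 (Hage (Full p)) (ex_intro _ p (conj gp (emb_id _))))
    as [S [HS [f [[fi fr] _]]]].
  exists S, (fun x => proj1_sig (f x)). split; auto. split; [|split].
  - intro x. exact (proj2_sig (f x)).
  - intros x y H. apply fi.
    destruct (f x) as [u pu]; destruct (f y) as [v pv]; simpl in *; subst.
    f_equal. apply proof_irrelevance.
  - intros a b c. apply (fr a b c).
Qed.

Lemma get_loc (M : tstruct) J (Hage : age_eq M J Cid) S :
  J S -> exists q G, good q /\ locemb M S q G.
Proof.
  intro HS.
  assert (HC : Cid (restrict M S)).
  { apply Hage. exists S. split; auto. exists (fun x => x). split; [split; [auto| intros; tauto]|].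
    intro y; exists y; auto. }
  destruct HC as [q [gq [g [gi gr]]]].
  pose (G := fun x : M => match excluded_middle_informative (S x) with
                          | left H => g (exist _ x H) | right _ => inl 0 end).
  assert (HG : forall x (H : S x), G x = g (exist _ x H)).
  { intros x H. unfold G. destruct (excluded_middle_informative (S x)) as [H'|N].
    - rewrite (proof_irrelevance _ H' H). reflexivity.
    - contradiction. }
  exists q, G. split; auto. split.
  - intros x y Hx Hy E. rewrite (HG x Hx), (HG y Hy) in E. apply gi in E.
    apply (f_equal (@proj1_sig _ _)) in E. exact E.
  - intros a b c Ha Hb Hc. rewrite (HG a Ha), (HG b Hb), (HG c Hc).
    exact (gr (exist _ a Ha) (exist _ b Hb) (exist _ c Hc)).
Qed.

Lemma comp_emb (M : tstruct) S S' p h q G :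
  copy M S p h -> locemb M S' q G -> (forall x, S x -> S' x) ->
  (forall x y, G (h x) = G (h y) -> x = y) /\
  (forall a b c, FT p a b c <-> FT q (G (h a)) (G (h b)) (G (h c))).
Proof.
  intros [hS [hi hr]] [Gi Gr] inc. split.
  - intros x y E. apply hi. apply Gi; auto.
  - intros a b c. rewrite hr. apply Gr; auto.
Qed.

Lemma comp_N (M : tstruct) S S' p h q G n :
  copy M S p h -> locemb M S' q G -> (forall x, S x -> S' x) -> G (h (inl n)) = inl n.
Proof.
  intros Hc Hl inc. destruct (comp_emb M S S' p h q G Hc Hl inc) as [i r].
  exact (rigid p q (fun x => G (h x)) i r n).
Qed.

Lemma comp_X (M : tstruct) S S' p h q G i :
  copy M S p h -> locemb M S' q G -> (forall x, S x -> S' x) -> exists j, G (h (inr i)) = inr j.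
Proof.
  intros Hc Hl inc. destruct (comp_emb M S S' p h q G Hc Hl inc) as [_ r].
  apply (xelem q). apply r. simpl. auto.
Qed.

Lemma notrep : ~ representable Cid.
Proof.
  intros [M [J [[_ [_ HJdir]] Hage]]].
  destruct (get_copy M J Hage p0 (good_pr _)) as [S0 [h0 [HS0 C0]]].
  set (xs := h0 (inr 0)).
  assert (sameN : forall S p h, J S -> copy M S p h -> forall n, h (inl n) = h0 (inl n)).
  { intros S p h HS Hc n.
    destruct (HJdir S0 S HS0 HS) as [S' [HS' [i0 i1]]].
    destruct (get_loc M J Hage S' HS') as [q [G [gq Hl]]].
    apply (proj1 Hl); [apply i1, (proj1 Hc)| apply i0, (proj1 C0)|].
    rewrite (comp_N M S S' p h q G n Hc Hl i1), (comp_N M S0 S' p0 h0 q G n C0 Hl i0).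
    reflexivity. }
  set (Q := fun r x => exists S h, J S /\ copy M S (pr r) h /\ h (inr 0) = x).
  set (K := fun x k => (x = xs /\ k = 0) \/
                       (x <> xs /\ exists n, k = S n /\ rel M xs x (h0 (inl n)))).
  assert (HA : forall r, exists x, Q r x).
  { intro r. destruct (get_copy M J Hage (pr r) (good_pr _)) as [S [h [HS Hc]]].
    exists (h (inr 0)), S, h. auto. }
  assert (HD : forall r x, Q r x -> forall n, r n = true <-> rel M (h0 (inl n)) x (h0 (inl n))).
  { intros r x [S [h [HS [Hc Hx]]]] n. subst x.
    rewrite <- (sameN S (pr r) h HS Hc n).
    rewrite <- (proj2 (proj2 Hc)). simpl. tauto. }
  assert (HB : forall r x, Q r x -> exists k, K x k).
  { intros r x [S [h [HS [Hc Hx]]]].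
    destruct (classic (x = xs)) as [E|NE]; [exists 0; left; auto|].
    destruct (HJdir S0 S HS0 HS) as [S' [HS' [i0 i1]]].
    destruct (get_loc M J Hage S' HS') as [q [G [gq Hl]]].
    destruct (comp_X M S0 S' p0 h0 q G 0 C0 Hl i0) as [i Ei].
    destruct (comp_X M S S' (pr r) h q G 0 Hc Hl i1) as [j Ej].
    rewrite Hx in Ej. fold xs in Ei.
    assert (Hxs : S' xs) by (apply i0, (proj1 C0)).
    assert (Hxx : S' x) by (rewrite <- Hx; apply i1, (proj1 Hc)).
    assert (Hij : i <> j).
    { intro E. subst j. apply NE. apply (proj1 Hl); auto. congruence. }
    exists (Datatypes.S (fc q i j)). right. split; auto. exists (fc q i j). split; auto.
    apply (proj2 Hl); auto; [apply i0, (proj1 C0)|].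
    rewrite Ei, Ej, (comp_N M S0 S' p0 h0 q G _ C0 Hl i0). simpl. auto. }
  assert (HC : forall r r' x x' k, Q r x -> Q r' x' -> K x k -> K x' k -> x = x').
  { intros r r' x x' k [S [h [HS [Hc Hx]]]] [S1 [h1 [HS1 [Hc1 Hx1]]]] Kx Kx'.
    destruct Kx as [[E1 E2]|[N1 [n [E1 R1]]]]; destruct Kx' as [[E3 E4]|[N3 [n' [E3 R3]]]];
      try congruence.
    assert (n' = n) by congruence. subst n'.
    destruct (HJdir S0 S HS0 HS) as [S2 [HS2 [i0 i1]]].
    destruct (HJdir S2 S1 HS2 HS1) as [S3 [HS3 [i2 i3]]].
    destruct (get_loc M J Hage S3 HS3) as [q [G [gq Hl]]].
    assert (j0 : forall y, S0 y -> S3 y) by auto.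
    assert (j1 : forall y, S y -> S3 y) by auto.
    destruct (comp_X M S0 S3 p0 h0 q G 0 C0 Hl j0) as [i Ei].
    destruct (comp_X M S S3 (pr r) h q G 0 Hc Hl j1) as [j Ej].
    destruct (comp_X M S1 S3 (pr r') h1 q G 0 Hc1 Hl i3) as [j' Ej'].
    rewrite Hx in Ej. rewrite Hx1 in Ej'. fold xs in Ei.
    pose proof (comp_N M S0 S3 p0 h0 q G n C0 Hl j0) as En.
    assert (Hxs : S3 xs) by (apply j0, (proj1 C0)).
    assert (Hxx : S3 x) by (rewrite <- Hx; apply j1, (proj1 Hc)).
    assert (Hxx' : S3 x') by (rewrite <- Hx1; apply i3, (proj1 Hc1)).
    assert (Hn : S3 (h0 (inl n))) by (apply j0, (proj1 C0)).
    apply (proj2 Hl) in R1; auto. apply (proj2 Hl) in R3; auto.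
    rewrite Ei, Ej, En in R1. rewrite Ei, Ej', En in R3. simpl in R1, R3.
    destruct R1 as [A1 B1]. destruct R3 as [A3 B3].
    assert (j = j') by (apply (proj1 gq i j j'); congruence). subst j'.
    apply (proj1 Hl); auto. congruence. }
  set (P := fun r k => exists x, Q r x /\ K x k).
  assert (HP : forall r, exists k, P r k).
  { intro r. destruct (HA r) as [x Hx]. destruct (HB r x Hx) as [k Hk]. exists k, x. auto. }
  assert (HU : forall r r' k, P r k -> P r' k -> forall n, r n = r' n).
  { intros r r' k [x [Qx Kx]] [x' [Qx' Kx']] n.
    assert (x = x') by (eapply HC; eauto). subst x'.
    pose proof (HD r x Qx n). pose proof (HD r' x Qx' n).
    destruct (r n), (r' n); auto.
    - symmetry. tauto.
    - tauto. }
  pose (d := fun n => match excluded_middle_informative (exists r, P r n) with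
                      | left H => negb (proj1_sig (constructive_indefinite_description _ H) n)
                      | right _ => false end).
  destruct (HP d) as [k Hk].
  assert (Hex : exists r, P r k) by (exists d; exact Hk).
  assert (Hd : d k = negb (proj1_sig (constructive_indefinite_description _ Hex) k)).
  { unfold d. destruct (excluded_middle_informative (exists r, P r k)) as [H'|N].
    - rewrite (proof_irrelevance _ H' Hex). reflexivity.
    - contradiction. }
  destruct (constructive_indefinite_description _ Hex) as [r0 Hr0]. simpl in Hd.
  pose proof (HU d r0 k Hk Hr0 k) as E. rewrite Hd in E.
  destruct (r0 k); discriminate.
Qed.

Theorem theorem2 :
  exists C : tstruct -> Prop,
    is_ideal C /\ aleph1_bounded C /\ ~ representable C.
Proof.
  exists Cid. split; [apply Cid_ideal| split; [apply Cid_bounded| apply notrep]].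
Qed.
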